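(* Let $k$ be a field, $V$ a $k$-vector space, $\varphi\in\operatorname{End}_k(V)$ a finite potent endomorphism with index $i(\varphi)=r$ and AST-decomposition $V=W_\varphi\oplus U_\varphi$. Then an endomorphism $\psi\in\operatorname{End}_k(V)$ is a G-Drazin inverse of $\varphi$ if and only if $W_\varphi$ and $U_\varphi$ are invariant under $\psi$, $\psi|_{W_\varphi}=(\varphi|_{W_\varphi})^{-1}$, and $\psi|_{U_\varphi}$ is a generalized inverse of $\varphi|_{U_\varphi}$.
   Context: An endomorphism $\varphi$ of a $k$-vector space $V$ is finite potent if $\varphi^n(V)$ is finite dimensional for some $n$. For such $\varphi$, the AST-decomposition is $V=U_\varphi\oplus W_\varphi$ where $U_\varphi=\{v\in V: \varphi^m(v)=0 \text{ for some } m\}$ and $W_\varphi=\{v\in V: p(\varphi)(v)=0 \text{ for some } p(x)\in k[x] \text{ coprime to } x\}$; both are $\varphi$-invariant, $\varphi|_{U_\varphi}$ is nilpotent, $W_\varphi$ is finite dimensional and $\varphi|_{W_\varphi}$ is an automorphism. The index $i(\varphi)$ is the nilpotency order of $\varphi|_{U_\varphi}$. An endomorphism $\psi\in\operatorname{End}_k(V)$ is a G-Drazin inverse of $\varphi$ if $\varphi\circ\psi\circ\varphi=\varphi$ and $\psi\circ\varphi^{r}=\varphi^{r}\circ\psi$, where $r=i(\varphi)$. A generalized inverse of an endomorphism $g$ of a vector space $U$ is an endomorphism $g^-$ of $U$ with $g\circ g^-\circ g=g$. *)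

(* Defs.v *)
From HB Require Import structures.
From mathcomp Require Import all_boot all_order all_algebra.
Set Implicit Arguments. Unset Strict Implicit. Unset Printing Implicit Defensive.
Import GRing.Theory.
Local Open Scope ring_scope.

Section Defs.
Variables (k : fieldType) (V : lmodType k).

Definition finite_dimensional (S : V -> Prop) : Prop :=
  exists s : seq V, forall v, S v ->
    exists c : 'I_(size s) -> k, v = \sum_(i < size s) c i *: s`_i.

Definition image (f : V -> V) : V -> Prop := fun v => exists x, v = f x.

Definition finite_potent (phi : {linear V -> V}) : Prop :=
  exists n : nat, finite_dimensional (image (iter n phi)).

Definition poly_endo (p : {poly k}) (phi : V -> V) (v : V) : V :=
  \sum_(i < size p) p`_i *: iter i phi v.

Definition U_ (phi : {linear V -> V}) : V -> Prop :=
  fun v => exists m : nat, iter m phi v = 0.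

Definition W_ (phi : {linear V -> V}) : V -> Prop :=
  fun v => exists p : {poly k}, coprimep p 'X /\ poly_endo p phi v = 0.

Definition is_index (phi : {linear V -> V}) (r : nat) : Prop :=
  (forall u, U_ phi u -> iter r phi u = 0) /\
  (forall r' : nat, (forall u, U_ phi u -> iter r' phi u = 0) -> (r <= r')%N).

Definition G_Drazin_inverse (phi psi : {linear V -> V}) (r : nat) : Prop :=
  (forall v, phi (psi (phi v)) = phi v) /\
  (forall v, psi (iter r phi v) = iter r phi (psi v)).

Definition stable_under (f : {linear V -> V}) (S : V -> Prop) : Prop :=
  forall v, S v -> S (f v).

End Defs.

(* Main.v *)
Require Import Defs.
From HB Require Import structures.
From mathcomp Require Import all_boot all_order all_algebra.
From Stdlib Require Import ClassicalEpsilon.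
From mathcomp Require Import ring.
Set Implicit Arguments. Unset Strict Implicit.
Import GRing.Theory.
Local Open Scope ring_scope.

Section PE.
Variables (k : fieldType) (V : lmodType k) (phi : {linear V -> V}).

Notation PE p := (poly_endo p phi).
Implicit Types (p q : {poly k}) (v x y : V).

Lemma iter_lin n a x y : iter n phi (a *: x + y) = a *: iter n phi x + iter n phi y.
Proof. elim: n => [|n IH] //=; by rewrite IH linearP. Qed.

Lemma iter0 n : iter n phi 0 = 0.
Proof. elim: n => [|n IH] //=; by rewrite IH linear0. Qed.

Lemma iterD' n x y : iter n phi (x + y) = iter n phi x + iter n phi y.
Proof. have := iter_lin n 1 x y. rewrite !scale1r. exact. Qed.

Lemma iterZ n a x : iter n phi (a *: x) = a *: iter n phi x.
Proof. by rewrite -[a *: x]addr0 iter_lin iter0 addr0. Qed.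

Lemma iter_comm n x : iter n phi (phi x) = phi (iter n phi x).
Proof. by rewrite -iterSr iterS. Qed.

Lemma PE_big p n v : (size p <= n)%N -> PE p v = \sum_(i < n) p`_i *: iter i phi v.
Proof.
move=> Hn; rewrite /poly_endo (big_ord_widen n (fun i => p`_i *: iter i phi v) Hn).
rewrite big_mkcond /=; apply: eq_bigr => i _.
by case: ifP => // /negbT; rewrite -leqNgt => H; rewrite nth_default // scale0r.
Qed.

Lemma PE_lin p a x y : PE p (a *: x + y) = a *: PE p x + PE p y.
Proof.
rewrite /poly_endo scaler_sumr -big_split /=; apply: eq_bigr => i _.
by rewrite iter_lin scalerDr !scalerA mulrC.
Qed.

Lemma PE0v p : PE p 0 = 0.
Proof. by rewrite /poly_endo big1 // => i _; rewrite iter0 scaler0. Qed.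

Lemma PED p x y : PE p (x + y) = PE p x + PE p y.
Proof. have := PE_lin p 1 x y. rewrite !scale1r. exact. Qed.

Lemma PEZ p a x : PE p (a *: x) = a *: PE p x.
Proof. by rewrite -[a *: x]addr0 PE_lin PE0v addr0. Qed.

Lemma PEN p x : PE p (- x) = - PE p x.
Proof. by rewrite -scaleN1r PEZ scaleN1r. Qed.

Lemma PE_phi p x : PE p (phi x) = phi (PE p x).
Proof.
rewrite /poly_endo linear_sum; apply: eq_bigr => i _.
by rewrite linearZ iter_comm.
Qed.

Lemma PE_add p q v : PE (p + q) v = PE p v + PE q v.
Proof.
set n := maxn (size p) (size q).
rewrite (@PE_big _ n) ?(leq_trans (size_polyD _ _)) //.
rewrite (@PE_big p n) ?leq_maxl // (@PE_big q n) ?leq_maxr // -big_split /=.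
by apply: eq_bigr => i _; rewrite coefD scalerDl.
Qed.

Lemma PE_0 v : PE 0 v = 0.
Proof. by rewrite /poly_endo size_poly0 big_ord0. Qed.

Lemma PE_C c v : PE c%:P v = c *: v.
Proof.
rewrite (@PE_big _ 1) ?size_polyC ?leq_b1 // big_ord1 coefC /=. done.
Qed.

Lemma PE_Cmul c q v : PE (c%:P * q) v = c *: PE q v.
Proof.
rewrite mul_polyC (@PE_big _ (size q)) ?size_scale_leq // /poly_endo scaler_sumr.
by apply: eq_bigr => i _; rewrite coefZ scalerA.
Qed.

Lemma PE_mulX p v : PE (p * 'X) v = PE p (phi v).
Proof.
rewrite (@PE_big _ (size p).+1); last first.
  by rewrite (leq_trans (size_polyMleq _ _)) // size_polyX addn2.
rewrite big_ord_recl coefMX eqxx scale0r add0r /poly_endo.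
by apply: eq_bigr => i _; rewrite coefMX /= add0n iter_comm.
Qed.

Lemma PE_mul p q v : PE (p * q) v = PE p (PE q v).
Proof.
elim/poly_ind: p v => [|p c IH] v; first by rewrite mul0r !PE_0.
rewrite mulrDl PE_add -mulrA (mulrC 'X) mulrA PE_mulX IH PE_Cmul.
by rewrite PE_add PE_mulX PE_C PE_phi.
Qed.

Lemma PE_comm p q v : PE p (PE q v) = PE q (PE p v).
Proof. by rewrite -!PE_mul mulrC. Qed.

Lemma PE_Xn n v : PE 'X^n v = iter n phi v.
Proof.
elim: n v => [|n IH] v; first by rewrite expr0 -polyC1 PE_C scale1r.
by rewrite exprSr PE_mulX IH iterSr.
Qed.

End PE.
Section W.
Variables (k : fieldType) (V : lmodType k) (phi : {linear V -> V}).
Notation PE p := (poly_endo p phi).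
Implicit Types (p q : {poly k}) (v x y : V).

Lemma coprimeX0 p : coprimep p 'X -> p`_0 != 0.
Proof.
have := coprimep_XsubC p (0:k); rewrite polyC0 subr0 => ->.
by rewrite rootE horner_coef0.
Qed.

Lemma PE_split p v : PE p v = p`_0 *: v + phi (PE (drop_poly 1 p) v).
Proof.
have E : take_poly 1 p = (p`_0)%:P.
  by apply/polyP => i; rewrite coef_take_poly coefC; case: i.
by rewrite -{1}(poly_take_drop 1 p) E PE_add expr1 PE_mulX PE_phi PE_C.
Qed.

Lemma W_Z a x : W_ phi x -> W_ phi (a *: x).
Proof. by case=> p [Hp H]; exists p; rewrite PEZ H scaler0. Qed.

Lemma W_D x y : W_ phi x -> W_ phi y -> W_ phi (x + y).
Proof.
case=> p [Hp H] [q [Hq H']]; exists (p * q); split.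
  by rewrite coprimepMl Hp Hq.
by rewrite PED PE_mul PE_comm H PE0v PE_mul H' PE0v addr0.
Qed.

Lemma W_B x y : W_ phi x -> W_ phi y -> W_ phi (x - y).
Proof. by move=> Hx Hy; apply: W_D => //; rewrite -scaleN1r; apply: W_Z. Qed.

Lemma W_phi x : W_ phi x -> W_ phi (phi x).
Proof. by case=> p [Hp H]; exists p; rewrite PE_phi H linear0. Qed.

Lemma W_iter n x : W_ phi x -> W_ phi (iter n phi x).
Proof. by elim: n => [|n IH] //= Hx; apply: W_phi; apply: IH. Qed.

Lemma W_ker y : W_ phi y -> phi y = 0 -> y = 0.
Proof.
case=> p [Hp H] Hy; move: H; rewrite PE_split -PE_phi Hy PE0v addr0.
by move/eqP; rewrite scaler_eq0 (negbTE (coprimeX0 Hp)) /= => /eqP.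
Qed.

Lemma W_surj w : W_ phi w -> exists x, W_ phi x /\ phi x = w.
Proof.
move=> Hw; case: (Hw) => p [Hp H].
exists (- (p`_0)^-1 *: PE (drop_poly 1 p) w); split.
  apply: W_Z; exists p; split => //; by rewrite PE_comm H PE0v.
move: H; rewrite PE_split => /eqP; rewrite addr_eq0 => /eqP E.
by rewrite linearZ /= scaleNr -scalerN -E scalerA mulVf ?(coprimeX0 Hp) // scale1r.
Qed.

Lemma W_surj_iter n w : W_ phi w -> exists x, W_ phi x /\ iter n phi x = w.
Proof.
elim: n w => [|n IH] w Hw; first by exists w.
have [x1 [Hx1 <-]] := W_surj Hw; have [x [Hx <-]] := IH _ Hx1.
by exists x; split => //; rewrite iterSr iter_comm.
Qed.

Lemma U_iter r (Hr : is_index phi r) u : U_ phi u -> iter r phi u = 0.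
Proof. by case: Hr => H _; apply: H. Qed.

End W.
Section Dec.
Variables (k : fieldType) (V : lmodType k) (phi : {linear V -> V}).
Notation PE p := (poly_endo p phi).

Lemma lin_dep (s : seq V) (x : 'I_(size s).+1 -> V) :
  (forall j, exists c : 'I_(size s) -> k, x j = \sum_(i < size s) c i *: s`_i) ->
  exists a : 'I_(size s).+1 -> k, (exists j, a j != 0) /\ \sum_j a j *: x j = 0.
Proof.
move=> H.
pose c j := proj1_sig (constructive_indefinite_description _ (H j)).
have Hc j : x j = \sum_i c j i *: s`_i :=
  proj2_sig (constructive_indefinite_description _ (H j)).
pose C : 'M[k]_((size s).+1, size s) := \matrix_(j, i) c j i.
have : kermx C != 0.
  rewrite kermx_eq0 /row_free; apply/negP => /eqP E.
  by have := rank_leq_col C; rewrite E ltnn.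
move=> Hne.
have [j0 Hj0] : exists j0, row j0 (kermx C) != 0.
  case: (pickP (fun j => row j (kermx C) != 0)) => [j Hj|Hn]; first by exists j.
  exfalso; move/negP: Hne; apply; apply/eqP/row_matrixP => j.
  by rewrite row0; move: (Hn j) => /negbFE/eqP.
set a := row j0 (kermx C).
have Ha : a *m C = 0 by rewrite /a -row_mul mulmx_ker row0.
exists (fun j => a 0 j); split.
  case: (pickP (fun j => a 0 j != 0)) => [j Hj|Hn]; first by exists j.
  exfalso; move/negP: Hj0; apply; apply/eqP/rowP => j.
  by rewrite [RHS]mxE; apply/eqP; apply/negbFE; exact: (Hn j).
under eq_bigr => j _ do rewrite Hc scaler_sumr.
under eq_bigr => j _ do under eq_bigr => i _ do rewrite scalerA.
rewrite exchange_big /=; apply: big1 => i _.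
rewrite -scaler_suml.
have -> : \sum_j a 0 j * c j i = 0.
  move: Ha => /matrixP/(_ 0 i); rewrite [RHS]mxE mxE => E.
  apply: etrans E; by under [RHS]eq_bigr => j _ do rewrite [C _ _]mxE.
exact: scale0r.
Qed.

Lemma PE_sum m (F : 'I_m -> {poly k}) v :
  PE (\sum_(j < m) F j) v = \sum_(j < m) PE (F j) v.
Proof.
elim/big_rec2: _ => [|j y p _ <-]; [exact: PE_0 | exact: PE_add].
Qed.

Lemma decomp (Hfp : finite_potent phi) v :
  exists u w, U_ phi u /\ W_ phi w /\ v = u + w.
Proof.
case: Hfp => n [s Hs].
have [a [[j0 Hj0] Ha]] := @lin_dep s (fun j => iter (n + j) phi v)
   (fun j => Hs _ (ex_intro _ (iter j phi v) (iterD _ _ _ _))).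
pose P := \sum_(j < (size s).+1) a j *: 'X^(n + j).
have HP : PE P v = 0.
  rewrite /P PE_sum; apply: (etrans _ Ha); apply: eq_bigr => j _.
  by rewrite -mul_polyC PE_Cmul PE_Xn.
have P0 : P != 0.
  apply/eqP => E; move/eqP: Hj0; apply.
  have := congr1 (fun p : {poly k} => p`_(n + j0)) E.
  rewrite /= coef0 /P coef_sum (bigD1 j0) //= coefZ coefXn eqxx mulr1 big1 ?addr0 //.
  move=> j Hj; rewrite coefZ coefXn eqn_add2l.
  suff -> : (j0 == j :> nat) = false by rewrite mulr0.
  by apply/negbTE; rewrite eq_sym.
have [m [q Hq EP]] := multiplicity_XsubC P 0.
rewrite P0 /= in Hq; rewrite polyC0 subr0 in EP.
have Hqc : coprimep q 'X.
  by have := coprimep_XsubC q (0:k); rewrite polyC0 subr0 => ->.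
have [[u1 u2] /= Hb] : exists u : {poly k} * {poly k}, u.1 * q + u.2 * 'X^m = 1.
  by apply/Bezout_eq1_coprimepP; apply: coprimep_expr.
exists (PE (u1 * q) v), (PE (u2 * 'X^m) v); split; [|split].
- exists m; rewrite -PE_Xn -PE_mul.
  have -> : 'X^m * (u1 * q) = u1 * P by rewrite EP; ring.
  by rewrite PE_mul HP PE0v.
- exists q; split => //; rewrite -PE_mul.
  have -> : q * (u2 * 'X^m) = u2 * P by rewrite EP; ring.
  by rewrite PE_mul HP PE0v.
- by rewrite -PE_add Hb -polyC1 PE_C scale1r.
Qed.

End Dec.

Theorem proposition3p4 (k : fieldType) (V : lmodType k)
  (phi : {linear V -> V}) (r : nat) :
  finite_potent phi -> is_index phi r ->
  forall psi : {linear V -> V},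
    G_Drazin_inverse phi psi r <->
    [/\ stable_under psi (W_ phi), stable_under psi (U_ phi),
        (* psi|_W = (phi|_W)^{-1} *)
        (forall w, W_ phi w -> phi (psi w) = w /\ psi (phi w) = w) &
        (* psi|_U is a generalized inverse of phi|_U *)
        (forall u, U_ phi u -> phi (psi (phi u)) = phi u)].
Proof.
move=> Hfp Hr psi; split.
- case=> H1 H2.
  have stW : stable_under psi (W_ phi).
    move=> w Hw; have [x [Hx <-]] := W_surj_iter r Hw.
    rewrite H2; have [u' [w' [Hu' [Hw' ->]]]] := decomp Hfp (psi x).
    by rewrite iterD' (U_iter Hr Hu') add0r; apply: W_iter.
  split => //.
  + move=> u [m Hm]; exists r.
    by rewrite -H2 (U_iter Hr (ex_intro _ m Hm)) linear0.
  + move=> w Hw; have [x [Hx <-]] := W_surj Hw; split; first by rewrite H1.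
    apply/eqP; rewrite -subr_eq0; apply/eqP; apply: W_ker.
      by apply: W_B; [apply: stW; apply: W_phi; apply: W_phi | apply: W_phi].
    by rewrite linearB /= H1 subrr.
- case=> sW sU HW HU; split.
  + move=> v; have [u [w [Hu [Hw ->]]]] := decomp Hfp v.
    by rewrite !linearD /= HU // (proj2 (HW _ Hw)).
  + move=> v; have [u [w [Hu [Hw ->]]]] := decomp Hfp v.
    rewrite [psi (u + w)]linearD /= !iterD' (U_iter Hr Hu) (U_iter Hr (sU _ Hu)) !add0r.
    case: r {Hr} => [|n] //.
    by rewrite iterS (proj2 (HW _ (W_iter n Hw))) iterSr (proj1 (HW _ Hw)).
Qed.
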